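(* Let $p,q\ge 2$. (i) If $M_1, M_2 \subset \widetilde{\mathrm{Ein}}^{p,q}$ are two Minkowski patches, then $\pi_{\mathbf{X}}(M_1 \cap \iota(M_2))$ is the complement of $\pi_{\mathbf{X}}(M_1 \cap M_2)$ in $\pi_{\mathbf{X}}(M_1) \cap \pi_{\mathbf{X}}(M_2)$. (ii) If $M_1, M_2, M_3 \subset \widetilde{\mathrm{Ein}}^{p,q}$ are three Minkowski patches with $M_1 \cap M_3 = M_2 \cap M_3$, then $M_1 = M_2$.
   Context: $\widetilde{\mathrm{Ein}}^{p,q}\cong\mathbb{S}^p\times\mathbb{S}^q$ is the set of isotropic vectors of Euclidean norm $1$ in $\mathbb{R}^{p+1,q+1}$, $\pi_{\mathbf{X}}$ its double cover onto $\mathrm{Ein}^{p,q}$ (isotropic lines, with induced conformal structure), and $\iota$ the product of antipodal maps. Minkowski patches of $\mathrm{Ein}^{p,q}$ are $M_x=\{[w]:B(v,w)\neq0\}$ for $x=[v]$ isotropic; those of $\widetilde{\mathrm{Ein}}^{p,q}$ are the connected components of $\pi_{\mathbf{X}}^{-1}(M_x)$. *)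

(* Defs.v *)
From Stdlib Require Import Reals.
Open Scope R_scope.

(* Vectors of R^{p+1,q+1} are functions nat -> R whose coordinates of index
   >= p+q+2 vanish.  Coordinates 0..p have sign +, coordinates p+1..p+q+1
   have sign -. *)
Definition vec := nat -> R.

Fixpoint rsum (n : nat) (f : nat -> R) : R :=
  match n with O => 0 | S n => rsum n f + f n end.

Definition isvec (p q : nat) (v : vec) : Prop :=
  forall i, (p + q + 2 <= i)%nat -> v i = 0.

Definition Bform (p q : nat) (v w : vec) : R :=
  rsum (S p) (fun i => v i * w i)
  - rsum (S q) (fun i => v (S p + i)%nat * w (S p + i)%nat).

Definition eucl_norm (p q : nat) (v : vec) : R :=
  sqrt (rsum (p + q + 2) (fun i => v i * v i)).

Definition vzero : vec := fun _ => 0.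
Definition vscale (c : R) (v : vec) : vec := fun i => c * v i.
Definition vopp (v : vec) : vec := fun i => - v i.

(* isotropic nonzero vector: representative of a point of Ein^{p,q} *)
Definition EinRep (p q : nat) (u : vec) : Prop :=
  isvec p q u /\ u <> vzero /\ Bform p q u u = 0.

Definition Etilde (p q : nat) (w : vec) : Prop :=
  isvec p q w /\ Bform p q w w = 0 /\ eucl_norm p q w = 1.

(* A subset of Ein^{p,q} (= set of isotropic lines) is represented by the
   predicate "u is a representative of a line in the subset". *)

Definition piX (S : vec -> Prop) : vec -> Prop :=
  fun u => exists w, S w /\ exists c, c <> 0 /\ u = vscale c w.

(* iota = product of antipodal maps = v |-> -v *)
Definition iota (w : vec) : vec := vopp w.

Definition image (f : vec -> vec) (S : vec -> Prop) : vec -> Prop :=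
  fun w => exists u, S u /\ w = f u.

Definition inter (S T : vec -> Prop) : vec -> Prop := fun w => S w /\ T w.

Definition MinkEin (p q : nat) (v : vec) : vec -> Prop :=
  fun u => EinRep p q u /\ Bform p q v u <> 0.

Definition preimX (p q : nat) (A : vec -> Prop) : vec -> Prop :=
  fun w => Etilde p q w /\ A w.

Definition dist (p q : nat) (x y : vec) : R :=
  eucl_norm p q (fun i => x i - y i).

Definition is_open (p q : nat) (U : vec -> Prop) : Prop :=
  forall x, U x -> exists eps, eps > 0 /\
    forall y, dist p q x y < eps -> U y.

Definition connected (p q : nat) (S : vec -> Prop) : Prop :=
  ~ (exists U V, is_open p q U /\ is_open p q V /\
       (forall x, S x -> U x \/ V x) /\
       (exists x, S x /\ U x) /\ (exists x, S x /\ V x) /\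
       (forall x, S x -> U x -> V x -> False)).

Definition is_component (p q : nat) (A C : vec -> Prop) : Prop :=
  (exists x, C x) /\ (forall x, C x -> A x) /\ connected p q C /\
  (forall D, connected p q D -> (forall x, C x -> D x) ->
     (forall x, D x -> A x) -> forall x, D x -> C x).

Definition MinkPatchTilde (p q : nat) (M : vec -> Prop) : Prop :=
  exists v, EinRep p q v /\ is_component p q (preimX p q (MinkEin p q v)) M.

(* Main.v *)
Require Import Defs.
From Stdlib Require Import Reals Lra Lia FunctionalExtensionality Classical.
Open Scope R_scope.

Lemma rsum_ext n f g : (forall i, (i < n)%nat -> f i = g i) -> rsum n f = rsum n g.
Proof. induction n; simpl; intros H; auto. rewrite IHn by (intros; apply H; lia). rewrite H by lia. auto. Qed.

Lemma rsum_plus n f g : rsum n (fun i => f i + g i) = rsum n f + rsum n g.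
Proof. induction n; simpl; [lra|]. rewrite IHn. lra. Qed.

Lemma rsum_scal n c f : rsum n (fun i => c * f i) = c * rsum n f.
Proof. induction n; simpl; [lra|]. rewrite IHn. lra. Qed.

Lemma rsum_opp n f : rsum n (fun i => - f i) = - rsum n f.
Proof. induction n; simpl; [lra|]. rewrite IHn. lra. Qed.

Lemma rsum_app a b f : rsum (a + b) f = rsum a f + rsum b (fun i => f (a + i)%nat).
Proof. induction b; simpl. rewrite Nat.add_0_r. lra. rewrite Nat.add_succ_r. simpl. rewrite IHb. lra. Qed.

Lemma rsum_nonneg n f : (forall i, (i < n)%nat -> 0 <= f i) -> 0 <= rsum n f.
Proof. induction n; simpl; intros H; [lra|]. assert (0 <= f n) by (apply H; lia). assert (0 <= rsum n f) by (apply IHn; intros; apply H; lia). lra. Qed.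

Lemma rsum_le n f g : (forall i, (i < n)%nat -> f i <= g i) -> rsum n f <= rsum n g.
Proof. induction n; simpl; intros H; [lra|]. assert (f n <= g n) by (apply H; lia). assert (rsum n f <= rsum n g) by (apply IHn; intros; apply H; lia). lra. Qed.

Lemma rsum_term n f i : (forall j, (j < n)%nat -> 0 <= f j) -> (i < n)%nat -> f i <= rsum n f.
Proof. induction n; simpl; intros H Hi; [lia|].
  assert (0 <= rsum n f) by (apply rsum_nonneg; intros; apply H; lia).
  destruct (Nat.eq_dec i n). subst. lra.
  assert (f i <= rsum n f) by (apply IHn; [intros; apply H; lia | lia]). assert (0 <= f n) by (apply H; lia). lra. Qed.

Lemma rsum_sq_zero n f : rsum n (fun i => f i * f i) = 0 -> forall i, (i < n)%nat -> f i = 0.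
Proof. intros H i Hi. assert (f i * f i <= rsum n (fun i => f i * f i)) by (apply (rsum_term n (fun i => f i * f i)); [intros; nra| auto]).
  nra. Qed.

Lemma rsum_abs n f : Rabs (rsum n f) <= rsum n (fun i => Rabs (f i)).
Proof. induction n; simpl. rewrite Rabs_R0; lra. eapply Rle_trans. apply Rabs_triang. lra. Qed.

Lemma rsum_two m F : (2 <= m)%nat -> (forall i, (2 <= i < m)%nat -> F i = 0) -> rsum m F = F 0%nat + F 1%nat.
Proof. induction m; intros Hm H; [lia|]. destruct (Nat.eq_dec m 1). subst. simpl. lra.
  simpl. rewrite IHm by (try lia; intros; apply H; lia). rewrite (H m) by lia. lra. Qed.

Definition bsum (o m : nat) (f g : vec) : R := rsum m (fun i => f (o + i)%nat * g (o + i)%nat).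

Lemma bsum_sym o m f g : bsum o m f g = bsum o m g f.
Proof. unfold bsum. apply rsum_ext. intros; ring. Qed.

Lemma bsum_lin o m f g h a b : bsum o m f (fun j => a * g j + b * h j) = a * bsum o m f g + b * bsum o m f h.
Proof. unfold bsum. rewrite <- !rsum_scal, <- rsum_plus. apply rsum_ext. intros; ring. Qed.

Lemma bsum_scal_l o m f g a : bsum o m (vscale a f) g = a * bsum o m f g.
Proof. unfold bsum, vscale. rewrite <- rsum_scal. apply rsum_ext. intros; ring. Qed.

Lemma bsum_scal_r o m f g a : bsum o m f (vscale a g) = a * bsum o m f g.
Proof. unfold bsum, vscale. rewrite <- rsum_scal. apply rsum_ext. intros; ring. Qed.

Lemma bsum_opp_l o m f g : bsum o m (vopp f) g = - bsum o m f g.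
Proof. unfold bsum, vopp. rewrite <- rsum_opp. apply rsum_ext. intros; ring. Qed.
Lemma bsum_opp_r o m f g : bsum o m f (vopp g) = - bsum o m f g.
Proof. unfold bsum, vopp. rewrite <- rsum_opp. apply rsum_ext. intros; ring. Qed.

Lemma bsum_sq_nonneg o m f : 0 <= bsum o m f f.
Proof. apply rsum_nonneg. intros; nra. Qed.

Definition blk (o m j : nat) : bool := (o <=? j)%nat && (j <? o + m)%nat.

Lemma blk_in o m i : (i < m)%nat -> blk o m (o + i) = true.
Proof. intros. unfold blk. apply andb_true_intro; split; [apply Nat.leb_le|apply Nat.ltb_lt]; lia. Qed.

Lemma blk_out o m o' i : (o + m <= o' \/ o' + i < o)%nat -> blk o m (o' + i) = false.
Proof. intros. unfold blk. destruct (o <=? o' + i)%nat eqn:E1; destruct (o' + i <? o + m)%nat eqn:E2; auto.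
 apply Nat.leb_le in E1; apply Nat.ltb_lt in E2; lia. Qed.

Definition upd (o m : nat) (w f : vec) : vec := fun j => if blk o m j then f j else w j.

Lemma bsum_upd_in o m g w f : bsum o m g (upd o m w f) = bsum o m g f.
Proof. unfold bsum, upd. apply rsum_ext. intros. rewrite blk_in; auto. Qed.
Lemma bsum_upd_in2 o m w f : bsum o m (upd o m w f) (upd o m w f) = bsum o m f f.
Proof. unfold bsum, upd. apply rsum_ext. intros. rewrite blk_in; auto. Qed.
Lemma bsum_upd_out o m o' m' g w f : (o + m <= o' \/ o' + m' <= o)%nat -> bsum o' m' g (upd o m w f) = bsum o' m' g w.
Proof. intros H. unfold bsum, upd. apply rsum_ext. intros. rewrite blk_out; auto. lia. Qed.
Lemma bsum_upd_out2 o m o' m' w f : (o + m <= o' \/ o' + m' <= o)%nat -> bsum o' m' (upd o m w f) (upd o m w f) = bsum o' m' w w.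
Proof. intros H. unfold bsum, upd. apply rsum_ext. intros. rewrite blk_out; auto. lia. Qed.

Lemma Bform_eq p q v w : Bform p q v w = bsum 0 (S p) v w - bsum (S p) (S q) v w.
Proof. reflexivity. Qed.

Lemma nsq_eq p q w : rsum (p + q + 2) (fun i => w i * w i) = bsum 0 (S p) w w + bsum (S p) (S q) w w.
Proof. replace (p + q + 2)%nat with (S p + S q)%nat by lia. rewrite rsum_app. reflexivity. Qed.

Definition K := / 2.
Definition r := sqrt K.
Lemma K_pos : 0 < K. Proof. unfold K; lra. Qed.
Lemma r_pos : 0 < r. Proof. unfold r. apply sqrt_lt_R0, K_pos. Qed.
Lemma r_sq : r * r = K. Proof. unfold r. apply sqrt_sqrt. pose K_pos; lra. Qed.

Lemma Etilde_iff p q w : Etilde p q w <-> isvec p q w /\ bsum 0 (S p) w w = K /\ bsum (S p) (S q) w w = K.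
Proof. unfold Etilde, eucl_norm. rewrite nsq_eq, Bform_eq.
  pose proof (bsum_sq_nonneg 0 (S p) w). pose proof (bsum_sq_nonneg (S p) (S q) w).
  split.
  - intros [H1 [H2 H3]]. split; auto.
    assert (bsum 0 (S p) w w + bsum (S p) (S q) w w = 1).
    { apply sqrt_inj; try lra. rewrite H3, sqrt_1; auto. }
    unfold K; lra.
  - intros [H1 [H2 H3]]. split; auto. rewrite H2, H3. split; [lra|]. unfold K. replace (/2 + /2) with 1 by lra. apply sqrt_1.
Qed.

Section SP.
Variables (o m : nat) (e w : vec).
Definition c0 := bsum o m e w.
Definition cf (t : R) := (1 - t) * c0 + t * r.
Definition mu (t : R) := sqrt ((K - cf t * cf t) / (K - c0 * c0)).
Definition spath (t : R) : vec := upd o m w (fun j => cf t * e j + mu t * (w j - c0 * e j)).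

Lemma bsum_comb g a b c : bsum o m g (fun j => a * e j + b * (w j - c * e j)) = a * bsum o m g e + b * (bsum o m g w - c * bsum o m g e).
Proof. unfold bsum. transitivity (rsum m (fun i => a * (g (o+i)%nat * e (o+i)%nat) + (b * (g (o+i)%nat * w (o+i)%nat) + (-(b*c)) * (g (o+i)%nat * e (o+i)%nat)))).
  apply rsum_ext; intros; ring. rewrite !rsum_plus, !rsum_scal. ring. Qed.

Lemma spath_g g t : bsum o m g (spath t) = cf t * bsum o m g e + mu t * (bsum o m g w - c0 * bsum o m g e).
Proof. unfold spath. rewrite bsum_upd_in. apply bsum_comb. Qed.

Hypothesis He : bsum o m e e = 1.
Hypothesis Hw : bsum o m w w = K.
Hypothesis Hc : c0 * c0 < K.

Lemma c0_bounds : - r < c0 < r.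
Proof. pose proof r_pos. pose proof r_sq. split; nra. Qed.

Lemma cf_sq t : 0 <= t <= 1 -> cf t * cf t <= K.
Proof. intros Ht. pose proof c0_bounds. pose proof r_sq. pose proof r_pos. unfold cf.
  assert (- r < (1 - t) * c0 + t * r <= r) by nra. nra. Qed.

Lemma mu_sq t : 0 <= t <= 1 -> mu t * mu t = (K - cf t * cf t) / (K - c0 * c0).
Proof. intros Ht. unfold mu. apply sqrt_sqrt. pose proof (cf_sq t Ht). apply Rmult_le_pos; [lra|]. left; apply Rinv_0_lt_compat; lra. Qed.

Lemma spath_e t : bsum o m e (spath t) = cf t.
Proof. rewrite spath_g, He. unfold c0. ring. Qed.

Lemma spath_norm t : 0 <= t <= 1 -> bsum o m (spath t) (spath t) = K.
Proof. intros Ht. rewrite spath_g. rewrite (bsum_sym o m (spath t) e), spath_e.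
  rewrite (bsum_sym o m (spath t) w), spath_g, Hw. rewrite (bsum_sym o m w e). fold c0.
  replace (cf t * cf t + mu t * (cf t * c0 + mu t * (K - c0 * c0) - c0 * cf t)) with (cf t * cf t + (mu t * mu t) * (K - c0 * c0)) by ring.
  rewrite mu_sq by auto. field. lra. Qed.

Lemma mu0 : mu 0 = 1.
Proof. unfold mu, cf. replace ((1 - 0) * c0 + 0 * r) with c0 by ring. rewrite Rdiv_diag by lra. apply sqrt_1. Qed.

Lemma mu1 : mu 1 = 0.
Proof. unfold mu, cf. replace ((1 - 1) * c0 + 1 * r) with r by ring. rewrite r_sq. replace (K - K) with 0 by ring. unfold Rdiv. rewrite Rmult_0_l. apply sqrt_0. Qed.

Lemma spath0 : spath 0 = w.
Proof. apply functional_extensionality. intros j. unfold spath, upd. destruct (blk o m j); auto.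
  rewrite mu0. unfold cf. ring. Qed.

Lemma spath1 : spath 1 = upd o m w (fun j => r * e j).
Proof. apply functional_extensionality. intros j. unfold spath, upd. destruct (blk o m j); auto.
  rewrite mu1. unfold cf. ring. Qed.

Lemma cont_id x : continuity_pt (fun t => t) x.
Proof. exact (derivable_continuous_pt _ _ (derivable_pt_id x)). Qed.
Lemma cont_const c x : continuity_pt (fun _ => c) x.
Proof. apply continuity_pt_const. intros a b; auto. Qed.
Lemma cont_plus f g x : continuity_pt f x -> continuity_pt g x -> continuity_pt (fun t => f t + g t) x.
Proof. intros. exact (continuity_pt_plus f g x H H0). Qed.
Lemma cont_mult f g x : continuity_pt f x -> continuity_pt g x -> continuity_pt (fun t => f t * g t) x.
Proof. intros. exact (continuity_pt_mult f g x H H0). Qed.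
Lemma cont_sqrt f x : continuity_pt f x -> 0 <= f x -> continuity_pt (fun t => sqrt (f t)) x.
Proof. intros. exact (continuity_pt_comp f sqrt x H (continuity_pt_sqrt _ H0)). Qed.

Lemma cf_cont t : continuity_pt cf t.
Proof. replace cf with (fun t => c0 + t * (r - c0)).
  apply (cont_plus (fun _ => c0) (fun t => t * (r - c0))). apply cont_const.
  apply (cont_mult (fun t => t) (fun _ => r - c0)). apply cont_id. apply cont_const.
  apply functional_extensionality; intros; unfold cf; ring. Qed.

Lemma mu_cont t : 0 <= t <= 1 -> continuity_pt mu t.
Proof. intros Ht. unfold mu. apply cont_sqrt.
  - unfold Rdiv. apply (cont_mult (fun t => K - cf t * cf t) (fun _ => / (K - c0 * c0))); [|apply cont_const].
    exact (continuity_pt_minus (fun _ => K) (fun t => cf t * cf t) t (cont_const K t) (cont_mult cf cf t (cf_cont t) (cf_cont t))).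
  - pose proof (cf_sq t Ht). apply Rmult_le_pos; [lra|]. left; apply Rinv_0_lt_compat; lra.
Qed.

Lemma spath_cont j t : 0 <= t <= 1 -> continuity_pt (fun s => spath s j) t.
Proof. intros Ht. unfold spath, upd. destruct (blk o m j).
  - apply cont_plus. apply (cont_mult cf (fun _ => e j)); [apply cf_cont|apply cont_const].
    apply (cont_mult mu (fun _ => w j - c0 * e j)); [apply mu_cont; auto|apply cont_const].
  - apply cont_const.
Qed.
End SP.

Lemma sqnn (x : R) : 0 <= x * x. Proof. nra. Qed.

Lemma cpt_eps f x : continuity_pt f x -> forall eps, 0 < eps -> exists d, 0 < d /\ forall y, Rabs (y - x) < d -> Rabs (f y - f x) < eps.
Proof. intros H eps He. destruct (H eps He) as [alp [Ha Hb]]. exists alp; split; auto.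
  intros y Hy. destruct (Req_dec y x). subst. replace (f x - f x) with 0 by ring. rewrite Rabs_R0; auto.
  apply (Hb y). split. split; [exact I|auto]. simpl. unfold R_dist; auto. Qed.

Section Top.
Variables p q : nat.
Definition linked (S : vec -> Prop) (x y : vec) : Prop :=
  forall U V, is_open p q U -> is_open p q V -> (forall z, S z -> U z \/ V z) ->
    (forall z, S z -> U z -> V z -> False) -> U x -> U y.

Lemma linked_trans S x y z : linked S x y -> linked S y z -> linked S x z.
Proof. unfold linked; intros H1 H2 U V a b c d e. apply (H2 U V a b c d), (H1 U V a b c d e). Qed.

Lemma linked_sym S x y : S x -> S y -> linked S x y -> linked S y x.
Proof. unfold linked. intros Sx Sy H U V oU oV cov dis Uy.
  destruct (cov x Sx) as [|Vx]; auto. exfalso.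
  assert (V y) by (apply (H V U oV oU); [intros z Hz; destruct (cov z Hz); auto | intros z a b c; eapply dis; eauto | auto]).
  eapply dis; eauto. Qed.

Lemma connected_of_linked S : (forall x y, S x -> S y -> linked S x y) -> connected p q S.
Proof. intros H [U [V [oU [oV [cov [[x [Sx Ux]] [[y [Sy Vy]] dis]]]]]]].
  apply (dis y); auto. apply (H x y Sx Sy U V); auto. Qed.

Definition pcont (g : R -> vec) := forall t, 0 <= t <= 1 -> forall eps, 0 < eps -> exists d, 0 < d /\
  forall s, 0 <= s <= 1 -> Rabs (s - t) < d -> Defs.dist p q (g t) (g s) < eps.

Lemma sum_cont N (g : R -> vec) t : (forall j, (j < N)%nat -> continuity_pt (fun s => g s j) t) ->
  forall eps, 0 < eps -> exists d, 0 < d /\ forall s, Rabs (s - t) < d ->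
   rsum N (fun j => (g t j - g s j) * (g t j - g s j)) < eps.
Proof. induction N; intros H eps He.
  - exists 1; split; [lra|]. intros; simpl; lra.
  - destruct (IHN (fun j Hj => H j ltac:(lia)) (eps/2)) as [d1 [Hd1 H1]]; [lra|].
    assert (0 < sqrt (eps/2)) by (apply sqrt_lt_R0; lra).
    destruct (cpt_eps _ _ (H N ltac:(lia)) _ H0) as [d2 [Hd2 H2]].
    exists (Rmin d1 d2); split. apply Rmin_pos; auto.
    intros s Hs. simpl. specialize (H1 s ltac:(pose proof (Rmin_l d1 d2); lra)).
    specialize (H2 s ltac:(pose proof (Rmin_r d1 d2); lra)).
    assert ((g t N - g s N) * (g t N - g s N) < eps / 2).
    { rewrite <- (sqrt_sqrt (eps/2)) by lra. rewrite Rabs_minus_sym in H2.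
      assert (Rabs (g t N - g s N) * Rabs (g t N - g s N) < sqrt (eps/2) * sqrt (eps/2)).
      apply Rmult_le_0_lt_compat; auto; apply Rabs_pos.
      rewrite <- Rabs_mult in H3. rewrite Rabs_right in H3; auto. apply Rle_ge. pose proof (Rle_0_sqr (g t N - g s N)); unfold Rsqr in *; lra. }
    lra.
Qed.

Lemma pcont_of_coords g : (forall t, 0 <= t <= 1 -> forall j, continuity_pt (fun s => g s j) t) -> pcont g.
Proof. intros H t Ht eps He.
  destruct (sum_cont (p+q+2) g t (fun j _ => H t Ht j) (eps*eps)) as [d [Hd H1]]. nra.
  exists d; split; auto. intros s Hs Hst. unfold Defs.dist, eucl_norm.
  rewrite <- (sqrt_square eps) by lra. apply sqrt_lt_1. apply rsum_nonneg; intros; apply sqnn. nra. apply H1; auto. Qed.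

Lemma path_linked S (g : R -> vec) : pcont g -> (forall t, 0 <= t <= 1 -> S (g t)) -> linked S (g 0) (g 1).
Proof. intros Hc HS U V oU oV cov dis Ux.
  set (E := fun t => 0 <= t <= 1 /\ forall s, 0 <= s <= t -> U (g s)).
  assert (E0 : E 0). { split; [lra|]. intros s Hs. replace s with 0 by lra. auto. }
  assert (Eb : bound E). { exists 1. intros x [Hx _]. lra. }
  destruct (completeness E Eb (ex_intro _ 0 E0)) as [T [HT1 HT2]].
  assert (T0 : 0 <= T) by (apply HT1; auto).
  assert (T1 : T <= 1) by (apply HT2; intros x [Hx _]; lra).
  assert (F : forall s, 0 <= s < T -> U (g s)).
  { intros s Hs. destruct (classic (exists e, E e /\ s < e)) as [[e [[He1 He2] He3]]|Hn].
    apply He2; lra. exfalso. assert (T <= s). apply HT2. intros x Ex. destruct (Rle_lt_dec x s); auto. exfalso; apply Hn; eauto. lra. }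
  assert (UT : U (g T)).
  { destruct (cov (g T) (HS T ltac:(lra))) as [|VT]; auto. exfalso.
    destruct (Req_dec T 0) as [HT|HT]. { subst T. apply (dis (g 0)); auto. }
    destruct (oV _ VT) as [eps [Heps HV]]. destruct (Hc T ltac:(lra) eps Heps) as [d [Hd Hg]].
    set (s := Rmax 0 (T - d/2)).
    assert (0 <= s) by apply Rmax_l. assert (s < T). { unfold s. apply Rmax_lub_lt; lra. }
    assert (T - d/2 <= s) by apply Rmax_r.
    apply (dis (g s)). apply HS; lra. apply F; lra. apply HV. apply Hg. lra. rewrite Rabs_left; lra. }
  destruct (Req_dec T 1) as [E1|E1]. subst T; auto.
  exfalso. destruct (oU _ UT) as [eps [Heps HU]]. destruct (Hc T ltac:(lra) eps Heps) as [d [Hd Hg]].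
  set (T' := Rmin 1 (T + d/2)).
  assert (T < T'). { unfold T'. apply Rmin_glb_lt; lra. }
  assert (T' <= 1) by apply Rmin_l. assert (T' <= T + d/2) by apply Rmin_r.
  assert (E T'). { split; [lra|]. intros s Hs. destruct (Rlt_le_dec s T). apply F; lra.
    destruct (Req_dec s T). subst; auto. apply HU, Hg. lra. rewrite Rabs_right; lra. }
  pose proof (HT1 T' H2). lra.
Qed.

Lemma coord_le_dist x y i : (i < p + q + 2)%nat -> Rabs (x i - y i) <= Defs.dist p q x y.
Proof. intros Hi. unfold Defs.dist, eucl_norm. rewrite <- sqrt_Rsqr_abs. apply sqrt_le_1_alt.
  unfold Rsqr. apply (rsum_term _ (fun i => (x i - y i) * (x i - y i))); auto. intros; apply sqnn. Qed.

Lemma Bform_abs v d : Rabs (Bform p q v d) <= rsum (p + q + 2) (fun i => Rabs (v i) * Rabs (d i)).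
Proof. unfold Bform. replace (p + q + 2)%nat with (S p + S q)%nat by lia. rewrite rsum_app.
  eapply Rle_trans. apply Rabs_triang. rewrite Rabs_Ropp.
  apply Rplus_le_compat; eapply Rle_trans; try apply rsum_abs; right; apply rsum_ext; intros; apply Rabs_mult. Qed.

Lemma Bform_minus v x y : Bform p q v x - Bform p q v y = Bform p q v (fun i => x i - y i).
Proof. unfold Bform.
  rewrite (rsum_ext (S p) (fun i => v i * (x i - y i)) (fun i => v i * x i + (-1) * (v i * y i))) by (intros; ring).
  rewrite (rsum_ext (S q) (fun i => v (S p + i)%nat * (x (S p + i)%nat - y (S p + i)%nat)) (fun i => v (S p + i)%nat * x (S p + i)%nat + (-1) * (v (S p + i)%nat * y (S p + i)%nat))) by (intros; ring).
  rewrite !rsum_plus, !rsum_scal. ring. Qed.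

Lemma open_pos v : is_open p q (fun w => Bform p q v w > 0).
Proof. intros x Hx. set (L := rsum (p + q + 2) (fun i => Rabs (v i))).
  assert (0 <= L) by (apply rsum_nonneg; intros; apply Rabs_pos).
  exists (Bform p q v x / (L + 1)). split. apply Rdiv_lt_0_compat; lra.
  intros y Hy. assert (Rabs (Bform p q v x - Bform p q v y) < Bform p q v x).
  { rewrite Bform_minus. eapply Rle_lt_trans. apply Bform_abs.
    eapply Rle_lt_trans. apply (rsum_le _ _ (fun i => Rabs (v i) * Defs.dist p q x y)).
    intros i Hi. apply Rmult_le_compat_l. apply Rabs_pos. apply coord_le_dist; auto.
    rewrite (rsum_ext _ _ (fun i => Defs.dist p q x y * Rabs (v i))) by (intros; ring). rewrite rsum_scal. fold L.
    apply (Rmult_lt_compat_r (L+1)) in Hy; [|lra]. unfold Rdiv in Hy. rewrite Rmult_assoc, Rinv_l in Hy by lra.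
    assert (0 <= Defs.dist p q x y) by (apply sqrt_pos). nra. }
  apply Rabs_def2 in H0. lra. Qed.
End Top.

Lemma bsum_expand o m w e a : bsum o m (fun j => w j + a * e j) (fun j => w j + a * e j) = bsum o m w w + 2 * a * bsum o m e w + a * a * bsum o m e e.
Proof. unfold bsum.
  rewrite (rsum_ext m _ (fun i => w (o+i)%nat * w (o+i)%nat + ((2*a) * (e (o+i)%nat * w (o+i)%nat) + (a*a) * (e (o+i)%nat * e (o+i)%nat)))) by (intros; ring).
  rewrite !rsum_plus, !rsum_scal. ring. Qed.

Lemma cs_unit o m e w : bsum o m e e = 1 -> bsum o m w w = K -> bsum o m e w * bsum o m e w <= K.
Proof. intros He Hw. pose proof (bsum_sq_nonneg o m (fun j => w j + (- bsum o m e w) * e j)).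
  rewrite bsum_expand, He, Hw in H. nra. Qed.

Lemma coord_eq o m e w : bsum o m e e = 1 -> bsum o m w w = K -> bsum o m e w * bsum o m e w = K ->
  forall i, (i < m)%nat -> w (o + i)%nat = bsum o m e w * e (o + i)%nat.
Proof. intros He Hw Hc i Hi. set (c := bsum o m e w) in *.
  assert (bsum o m (fun j => w j + (- c) * e j) (fun j => w j + (- c) * e j) = 0).
  { rewrite bsum_expand, He, Hw. fold c. nra. }
  pose proof (rsum_sq_zero m (fun i => w (o+i)%nat + (-c) * e (o+i)%nat) H i Hi). simpl in H0. lra. Qed.

Section Conn.
Variables p q : nat.
Definition X := bsum 0 (S p).
Definition Y := bsum (S p) (S q).
Definition P (v : vec) : vec -> Prop := fun w => Etilde p q w /\ Bform p q v w > 0.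

Lemma BXY v w : Bform p q v w = X v w - Y v w.
Proof. reflexivity. Qed.

Lemma Etilde_XY w : Etilde p q w <-> isvec p q w /\ X w w = K /\ Y w w = K.
Proof. apply Etilde_iff. Qed.

Lemma nonzero_coord (v : vec) : v <> vzero -> exists i, v i <> 0.
Proof. intros H. apply NNPP. intros Hn. apply H. apply functional_extensionality. intros i. unfold vzero.
  apply NNPP. intros Hi. apply Hn. eauto. Qed.

Lemma EinRep_XY v : EinRep p q v -> X v v > 0 /\ X v v = Y v v.
Proof. intros [Hv [Hnz Hb]]. rewrite BXY in Hb. split; [|lra].
  destruct (nonzero_coord v Hnz) as [i Hi].
  destruct (Nat.lt_ge_cases i (p + q + 2)) as [Hl|Hg]; [|exfalso; apply Hi, Hv; auto].
  pose proof (rsum_term (p+q+2) (fun i => v i * v i) i (fun j _ => sqnn (v j)) Hl). simpl in H.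
  rewrite nsq_eq in H. fold X Y in H. assert (0 < v i * v i) by (apply Rlt_0_sqr in Hi; unfold Rsqr in Hi; lra). lra. Qed.

Variable v : vec.
Hypothesis Hv : EinRep p q v.
Definition s := sqrt (X v v).
Definition ex := vscale (/ s) v.
Definition ey := vscale (- / s) v.

Lemma s_pos : 0 < s. Proof. unfold s. apply sqrt_lt_R0. apply EinRep_XY; auto. Qed.
Lemma s_sq : s * s = X v v. Proof. unfold s. apply sqrt_sqrt. pose proof (EinRep_XY v Hv). lra. Qed.

Lemma Xv w : X v w = s * X ex w.
Proof. unfold ex, X. rewrite bsum_scal_l. pose proof s_pos. field. lra. Qed.
Lemma Yv w : Y v w = - s * Y ey w.
Proof. unfold ey, Y. rewrite bsum_scal_l. pose proof s_pos. field. lra. Qed.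
Lemma ex_unit : X ex ex = 1.
Proof. unfold ex, X. rewrite bsum_scal_l, bsum_scal_r. fold (X v v). rewrite <- s_sq. pose proof s_pos. field. lra. Qed.
Lemma ey_unit : Y ey ey = 1.
Proof. unfold ey, Y. rewrite bsum_scal_l, bsum_scal_r. fold (Y v v). destruct (EinRep_XY v Hv). rewrite <- H0, <- s_sq. pose proof s_pos. field. lra. Qed.

Lemma B_ex_ey w : Bform p q v w = s * (X ex w + Y ey w).
Proof. rewrite BXY, Xv, Yv. ring. Qed.

End Conn.

Lemma blk_false o m j : (j < o \/ o + m <= j)%nat -> blk o m j = false.
Proof. intros. unfold blk. destruct (o <=? j)%nat eqn:E1; destruct (j <? o + m)%nat eqn:E2; auto.
 apply Nat.leb_le in E1; apply Nat.ltb_lt in E2; lia. Qed.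
Lemma blk_true o m j : blk o m j = true -> (o <= j < o + m)%nat.
Proof. unfold blk. intros H. apply andb_prop in H as [H1 H2]. apply Nat.leb_le in H1; apply Nat.ltb_lt in H2; lia. Qed.

Lemma upd_isvec p q o m w f : (o + m <= p + q + 2)%nat -> isvec p q w -> isvec p q (upd o m w f).
Proof. intros H Hw j Hj. unfold upd. rewrite blk_false by lia. auto. Qed.

Lemma spath_out o m o' m' e w g t : (o + m <= o' \/ o' + m' <= o)%nat -> bsum o' m' g (spath o m e w t) = bsum o' m' g w.
Proof. intros; unfold spath; apply bsum_upd_out; auto. Qed.
Lemma spath_out2 o m o' m' e w t : (o + m <= o' \/ o' + m' <= o)%nat -> bsum o' m' (spath o m e w t) (spath o m e w t) = bsum o' m' w w.
Proof. intros; unfold spath; apply bsum_upd_out2; auto. Qed.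

Lemma c0_le_r o m e w : bsum o m e e = 1 -> bsum o m w w = K -> - r <= c0 o m e w <= r.
Proof. intros He Hw. pose proof (cs_unit o m e w He Hw). fold (c0 o m e w) in H. pose proof r_pos. pose proof r_sq. split; nra. Qed.

Lemma step_link p q S o m e w : bsum o m e e = 1 -> bsum o m w w = K -> - r < c0 o m e w ->
  (c0 o m e w < r -> forall t, 0 <= t <= 1 -> S (spath o m e w t)) ->
  linked p q S w (upd o m w (fun j => r * e j)).
Proof. intros He Hw Hc HS. pose proof (c0_le_r o m e w He Hw). pose proof r_pos. pose proof r_sq.
  destruct (Rlt_le_dec (c0 o m e w) r) as [Hlt|Hge].
  - assert (Hcc : c0 o m e w * c0 o m e w < K) by nra.
    assert (pc : pcont p q (spath o m e w)).
    { apply pcont_of_coords. intros t Ht j. apply spath_cont; auto. }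
    pose proof (path_linked p q S _ pc (HS Hlt)).
    rewrite spath0, spath1 in H2; auto.
  - assert (Heq : c0 o m e w = r) by lra.
    replace (upd o m w (fun j => r * e j)) with w. intros U V _ _ _ _ Hu; auto.
    apply functional_extensionality; intros j. unfold upd. destruct (blk o m j) eqn:Eb; auto.
    apply blk_true in Eb. replace j with (o + (j - o))%nat by lia.
    rewrite coord_eq with (o := o) (m := m) (e := e) (w := w); auto; try lia.
    fold (c0 o m e w). rewrite Heq. auto. fold (c0 o m e w). rewrite Heq. auto.
Qed.

Section Conn2.
Variables (p q : nat) (v : vec).
Hypothesis Hv : EinRep p q v.
Notation ex := (ex p v).
Notation ey := (ey p v).
Notation s := (s p v).
Notation X := (X p).
Notation Y := (Y p q).

Definition T1 w := upd 0 (S p) w (fun j => r * ex j).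
Definition T2 w := upd (S p) (S q) w (fun j => r * ey j).

Lemma Pfacts w : P p q v w -> isvec p q w /\ X w w = K /\ Y w w = K /\ - r < X ex w <= r /\ - r < Y ey w <= r /\ 0 < X ex w + Y ey w.
Proof. intros [HE HB]. apply Etilde_XY in HE as [H1 [H2 H3]]. rewrite (B_ex_ey p q v Hv) in HB.
  pose proof (s_pos p q v Hv). assert (0 < X ex w + Y ey w) by (apply (Rmult_lt_reg_l s); lra).
  pose proof (c0_le_r 0 (S p) ex w (ex_unit p q v Hv) H2). pose proof (c0_le_r (S p) (S q) ey w (ey_unit p q v Hv) H3).
  unfold c0 in *. fold X in H4. fold Y in H5. repeat split; auto; lra. Qed.

Lemma T1_prop w : P p q v w -> P p q v (T1 w) /\ linked p q (P p q v) w (T1 w) /\ Y ey (T1 w) = Y ey w /\ X ex (T1 w) = r.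
Proof. intros Hw. pose proof (Pfacts w Hw) as [Hi [HX [HY [Hc [Hd Hcd]]]]].
  pose proof (s_pos p q v Hv). pose proof r_sq. pose proof r_pos. pose proof (ex_unit p q v Hv).
  assert (HYT : Y ey (T1 w) = Y ey w) by (unfold T1, Y; apply bsum_upd_out; lia).
  assert (HXT : X ex (T1 w) = r). { unfold T1, X. rewrite bsum_upd_in. change (fun j => r * ex j) with (vscale r ex). rewrite bsum_scal_r. fold X. rewrite H2. ring. }
  split; [|split; [|split]]; auto.
  - split. apply Etilde_XY. split; [apply upd_isvec; auto; lia|split].
    unfold T1, X. rewrite bsum_upd_in2. change (fun j => r * ex j) with (vscale r ex). rewrite bsum_scal_l, bsum_scal_r. fold X. rewrite H2. lra.
    unfold T1, Y. rewrite bsum_upd_out2 by lia. auto.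
    rewrite (B_ex_ey p q v Hv). rewrite HYT, HXT. apply Rmult_lt_0_compat; lra.
  - apply step_link; auto. unfold c0. fold X. lra.
    intros Hlt t Ht. unfold c0 in Hlt. fold X in Hlt.
    assert (Hcc : c0 0 (S p) ex w * c0 0 (S p) ex w < K) by (unfold c0; fold X; nra).
    split. apply Etilde_XY. split; [unfold spath; apply upd_isvec; auto; lia|split].
    unfold X. apply spath_norm; auto. unfold Y. rewrite spath_out2 by lia. auto.
    rewrite (B_ex_ey p q v Hv). unfold X at 1. rewrite spath_e; auto. unfold Y. rewrite spath_out by lia. fold Y.
    unfold cf, c0. fold X. apply Rmult_lt_0_compat; auto. nra.
Qed.

Lemma T2_prop u : P p q v u -> X ex u = r -> P p q v (T2 u) /\ linked p q (P p q v) u (T2 u).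
Proof. intros Hw HXu. pose proof (Pfacts u Hw) as [Hi [HX [HY [Hc [Hd Hcd]]]]].
  pose proof (s_pos p q v Hv). pose proof r_sq. pose proof r_pos. pose proof (ey_unit p q v Hv).
  assert (HXT : X ex (T2 u) = r) by (unfold T2, X; rewrite bsum_upd_out by lia; auto).
  assert (HYT : Y ey (T2 u) = r). { unfold T2, Y. rewrite bsum_upd_in. change (fun j => r * ey j) with (vscale r ey). rewrite bsum_scal_r. fold Y. rewrite H2. ring. }
  split.
  - split. apply Etilde_XY. split; [apply upd_isvec; auto; lia|split].
    unfold T2, X. rewrite bsum_upd_out2 by lia. auto.
    unfold T2, Y. rewrite bsum_upd_in2. change (fun j => r * ey j) with (vscale r ey). rewrite bsum_scal_l, bsum_scal_r. fold Y. rewrite H2. lra.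
    rewrite (B_ex_ey p q v Hv). rewrite HYT, HXT. apply Rmult_lt_0_compat; lra.
  - apply step_link; auto. unfold c0. fold Y. lra.
    intros Hlt t Ht. unfold c0 in Hlt. fold Y in Hlt.
    assert (Hcc : c0 (S p) (S q) ey u * c0 (S p) (S q) ey u < K) by (unfold c0; fold Y; nra).
    split. apply Etilde_XY. split; [unfold spath; apply upd_isvec; auto; lia|split].
    unfold X. rewrite spath_out2 by lia. auto. unfold Y. apply spath_norm; auto.
    rewrite (B_ex_ey p q v Hv). unfold Y at 1. rewrite spath_e; auto. unfold X. rewrite spath_out by lia. fold X.
    unfold cf, c0. fold Y. apply Rmult_lt_0_compat; auto. nra.
Qed.

Definition Zc : vec := fun j => if blk 0 (S p) j then r * ex j else if blk (S p) (S q) j then r * ey j else 0.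

Lemma T21 w : isvec p q w -> T2 (T1 w) = Zc.
Proof. intros Hi. apply functional_extensionality; intros j. unfold T2, T1, upd, Zc.
  destruct (blk 0 (S p) j) eqn:E1; destruct (blk (S p) (S q) j) eqn:E2; auto.
  apply blk_true in E1; apply blk_true in E2; lia.
  apply Hi. destruct (Nat.lt_ge_cases j (S p)).
  assert (blk 0 (S p) j = true) by (apply (blk_in 0 (S p) j); lia). congruence.
  destruct (Nat.lt_ge_cases j (S p + S q)).
  assert (blk (S p) (S q) j = true) by (replace j with (S p + (j - S p))%nat by lia; apply blk_in; lia). congruence.
  lia.
Qed.

Lemma link_Z w : P p q v w -> P p q v Zc /\ linked p q (P p q v) w Zc.
Proof. intros Hw. destruct (T1_prop w Hw) as [H1 [H2 [H3 H4]]]. destruct (T2_prop (T1 w) H1 H4) as [H5 H6].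
  rewrite T21 in H5, H6 by (apply (Pfacts w Hw)). split; auto. eapply linked_trans; eauto. Qed.

Lemma P_connected : connected p q (P p q v).
Proof. apply connected_of_linked. intros x y Hx Hy. destruct (link_Z x Hx) as [HZ Hxz]. destruct (link_Z y Hy) as [_ Hyz].
  eapply linked_trans. apply Hxz. apply linked_sym; auto. Qed.
End Conn2.

Section Comp.
Variables p q : nat.

Lemma Bform_opp_l v w : Bform p q (vopp v) w = - Bform p q v w.
Proof. rewrite !BXY. unfold X, Y. rewrite !bsum_opp_l. ring. Qed.
Lemma Bform_opp_r v w : Bform p q v (vopp w) = - Bform p q v w.
Proof. rewrite !BXY. unfold X, Y. rewrite !bsum_opp_r. ring. Qed.
Lemma Bform_scal_r v w c : Bform p q v (vscale c w) = c * Bform p q v w.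
Proof. rewrite !BXY. unfold X, Y. rewrite !bsum_scal_r. ring. Qed.

Lemma EinRep_opp v : EinRep p q v -> EinRep p q (vopp v).
Proof. intros [H1 [H2 H3]]. split; [|split].
  intros i Hi. unfold vopp. rewrite H1; auto; ring.
  intros He. apply H2. apply functional_extensionality; intros i. assert (vopp v i = vzero i) by (rewrite He; auto). unfold vopp, vzero in *. lra.
  rewrite Bform_opp_l, Bform_opp_r, H3. ring. Qed.

Lemma Etilde_opp w : Etilde p q w -> Etilde p q (vopp w).
Proof. rewrite !Etilde_XY. intros [H1 [H2 H3]]. split; [|split].
  intros i Hi. unfold vopp. rewrite H1; auto; ring.
  unfold X in *. rewrite bsum_opp_l, bsum_opp_r. lra.
  unfold Y in *. rewrite bsum_opp_l, bsum_opp_r. lra. Qed.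

Lemma Etilde_EinRep w : Etilde p q w -> EinRep p q w.
Proof. intros H. pose proof H as H'. apply Etilde_XY in H' as [H1 [H2 H3]]. destruct H as [_ [Hb _]]. split; [|split]; auto.
  intros Hz. subst.
  assert (forall n, rsum n (fun i => vzero (0+i)%nat * vzero (0+i)%nat) = 0) by (induction n; [reflexivity|]; cbn [rsum]; rewrite IHn; unfold vzero; ring).
  unfold X, bsum in H2. rewrite H in H2. pose proof K_pos. lra. Qed.

Lemma comp_helper v0 A M x0 : EinRep p q v0 -> is_component p q A M ->
  (forall w, A w <-> (Etilde p q w /\ Bform p q v0 w <> 0)) -> M x0 -> Bform p q v0 x0 > 0 ->
  forall w, M w <-> P p q v0 w.
Proof. intros Hv [_ [CA [Cc Cm]]] HA Mx Bx.
  assert (Hsub : forall y, M y -> P p q v0 y).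
  { intros y My. destruct (HA y) as [HA1 _]. destruct (HA1 (CA y My)) as [Ey By]. split; auto.
    destruct (Rlt_le_dec 0 (Bform p q v0 y)); auto. exfalso. apply Cc.
    exists (fun w => Bform p q v0 w > 0), (fun w => Bform p q (vopp v0) w > 0).
    split; [apply open_pos|split; [apply open_pos|split; [|split; [|split]]]].
    - intros z Mz. destruct (HA z) as [HA1' _]. destruct (HA1' (CA z Mz)) as [_ Bz]. rewrite Bform_opp_l. lra.
    - exists x0; auto.
    - exists y. split; auto. rewrite Bform_opp_l. lra.
    - intros z _ Hz1 Hz2. rewrite Bform_opp_l in Hz2. lra. }
  intros w. split; auto. intros Pw. apply (Cm (P p q v0)); auto. apply P_connected; auto.
  intros z [Ez Bz]. apply HA. split; auto. lra. Qed.

Lemma comp_char M : MinkPatchTilde p q M -> exists v', EinRep p q v' /\ forall w, M w <-> P p q v' w.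
Proof. intros [v [Hv Hc]]. pose proof Hc as [[x0 Mx] [CA _]].
  destruct (CA x0 Mx) as [Ex [_ Bx]].
  destruct (Rlt_le_dec 0 (Bform p q v x0)).
  - exists v. split; auto. apply (comp_helper v _ M x0 Hv Hc); auto.
    intros w. unfold preimX, MinkEin. split. intros [a [_ c]]; auto. intros [a c]; split; auto. split; auto. apply Etilde_EinRep; auto.
  - exists (vopp v). split. apply EinRep_opp; auto. apply (comp_helper (vopp v) _ M x0 (EinRep_opp v Hv) Hc); auto.
    intros w. unfold preimX, MinkEin. rewrite Bform_opp_l. split. intros [a [_ c]]; split; auto; lra.
    intros [a c]; split; auto. split. apply Etilde_EinRep; auto. lra.
    rewrite Bform_opp_l. lra.
Qed.
End Comp.

Lemma sgn1 k a b : 0 < k -> k * a * (k * b) > 0 -> a * b > 0.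
Proof. intros. replace (k * a * (k * b)) with ((k*k) * (a*b)) in H0 by ring.
  destruct (Rlt_le_dec 0 (a*b)); auto. assert (0 < k*k) by nra. nra. Qed.
Lemma sgn2 k a b : 0 < k -> k * a * (k * b) < 0 -> a * b < 0.
Proof. intros. replace (k * a * (k * b)) with ((k*k) * (a*b)) in H0 by ring.
  destruct (Rlt_le_dec (a*b) 0); auto. assert (0 < k*k) by nra. nra. Qed.
Lemma sgn3 a b : 0 < a -> a * b > 0 -> b > 0.
Proof. intros. destruct (Rlt_le_dec 0 b); auto. nra. Qed.
Lemma sgn4 a b : a <= 0 -> a * b > 0 -> a < 0 /\ b < 0.
Proof. intros. destruct (Req_dec a 0). subst. nra. destruct (Rlt_le_dec b 0). lra. nra. Qed.
Lemma sgn5 a b : 0 < a -> a * b < 0 -> b < 0.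
Proof. intros. destruct (Rlt_le_dec b 0); auto. nra. Qed.
Lemma sgn6 a b : a <= 0 -> a * b < 0 -> a < 0 /\ b > 0.
Proof. intros. destruct (Req_dec a 0). subst. nra. destruct (Rlt_le_dec 0 b). lra. nra. Qed.

Section PartI.
Variables p q : nat.

Lemma normalize u : EinRep p q u -> exists k w, 0 < k /\ Etilde p q w /\ u = vscale k w.
Proof. intros Hu. destruct (EinRep_XY p q u Hu) as [Hx Hxy]. pose proof K_pos.
  set (k := sqrt (X p u u / K)). assert (0 < k) by (apply sqrt_lt_R0; apply Rdiv_lt_0_compat; lra).
  assert (kk : k * k = X p u u / K) by (apply sqrt_sqrt; left; apply Rdiv_lt_0_compat; lra).
  exists k, (vscale (/ k) u). split; auto. split.
  - apply Etilde_XY. destruct Hu as [Hi _]. split; [|split].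
    intros i Hi'. unfold vscale. rewrite Hi; auto; ring.
    unfold X. rewrite bsum_scal_l, bsum_scal_r. fold (X p u u).
    replace (/ k * (/ k * X p u u)) with (X p u u / (k * k)) by (field; lra). rewrite kk. field. lra.
    unfold Y. rewrite bsum_scal_l, bsum_scal_r. fold (Y p q u u). rewrite <- Hxy.
    replace (/ k * (/ k * X p u u)) with (X p u u / (k * k)) by (field; lra). rewrite kk. field. lra.
  - apply functional_extensionality; intros i. unfold vscale. field. lra.
Qed.

Lemma vopp_vopp w : vopp (vopp w) = w.
Proof. apply functional_extensionality; intros; unfold vopp; ring. Qed.
Lemma vscale_opp k w : vscale k w = vscale (- k) (vopp w).
Proof. apply functional_extensionality; intros; unfold vscale, vopp; ring. Qed.

Variables (M1 M2 : vec -> Prop) (v1 v2 : vec).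
Hypothesis h1 : forall w, M1 w <-> P p q v1 w.
Hypothesis h2 : forall w, M2 w <-> P p q v2 w.

Lemma img_iff w : image iota M2 w <-> Etilde p q w /\ Bform p q v2 w < 0.
Proof. split.
  - intros [u [Mu ->]]. apply h2 in Mu as [Eu Bu]. split. apply Etilde_opp; auto. unfold iota. rewrite Bform_opp_r. lra.
  - intros [Ew Bw]. exists (vopp w). split. apply h2. split. apply Etilde_opp; auto. rewrite Bform_opp_r; lra.
    unfold iota. rewrite vopp_vopp. auto. Qed.

Lemma piX_M1 u : EinRep p q u -> (piX M1 u <-> Bform p q v1 u <> 0).
Proof. intros Hu. split.
  - intros [w [Mw [c [cne ->]]]]. apply h1 in Mw as [_ Bw]. rewrite Bform_scal_r. apply Rmult_integral_contrapositive; split; lra.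
  - intros Hb. destruct (normalize u Hu) as [k [w [kp [Ew ->]]]]. rewrite Bform_scal_r in Hb.
    destruct (Rlt_le_dec 0 (Bform p q v1 w)).
    + exists w. split. apply h1; split; auto. exists k; split; auto; lra.
    + exists (vopp w). split. apply h1; split. apply Etilde_opp; auto. rewrite Bform_opp_r. assert (Bform p q v1 w <> 0) by (intro Z; apply Hb; rewrite Z; ring). lra.
      exists (-k); split. lra. apply vscale_opp. Qed.

Lemma piX_M2 u : EinRep p q u -> (piX M2 u <-> Bform p q v2 u <> 0).
Proof. intros Hu. split.
  - intros [w [Mw [c [cne ->]]]]. apply h2 in Mw as [_ Bw]. rewrite Bform_scal_r. apply Rmult_integral_contrapositive; split; lra.
  - intros Hb. destruct (normalize u Hu) as [k [w [kp [Ew ->]]]]. rewrite Bform_scal_r in Hb.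
    destruct (Rlt_le_dec 0 (Bform p q v2 w)).
    + exists w. split. apply h2; split; auto. exists k; split; auto; lra.
    + exists (vopp w). split. apply h2; split. apply Etilde_opp; auto. rewrite Bform_opp_r. assert (Bform p q v2 w <> 0) by (intro Z; apply Hb; rewrite Z; ring). lra.
      exists (-k); split. lra. apply vscale_opp. Qed.

Lemma piX_I12 u : EinRep p q u -> (piX (inter M1 M2) u <-> Bform p q v1 u * Bform p q v2 u > 0).
Proof. intros Hu. split.
  - intros [w [[M1w M2w] [c [cne ->]]]]. apply h1 in M1w as [_ B1]. apply h2 in M2w as [_ B2]. rewrite !Bform_scal_r.
    replace (c * Bform p q v1 w * (c * Bform p q v2 w)) with ((c * c) * (Bform p q v1 w * Bform p q v2 w)) by ring.
    apply Rmult_lt_0_compat. assert (0 < c * c) by (apply Rlt_0_sqr in cne; unfold Rsqr in cne; lra). lra. nra.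
  - intros Hb. destruct (normalize u Hu) as [k [w [kp [Ew ->]]]]. rewrite !Bform_scal_r in Hb. apply sgn1 in Hb; auto.
    destruct (Rlt_le_dec 0 (Bform p q v1 w)) as [Hl|Hl].
    + exists w. split. split; [apply h1|apply h2]; split; auto. eapply sgn3; eauto. exists k; split; auto; lra.
    + destruct (sgn4 _ _ Hl Hb). exists (vopp w). split. split; [apply h1|apply h2]; (split; [apply Etilde_opp; auto|rewrite Bform_opp_r]); lra.
      exists (-k); split. lra. apply vscale_opp. Qed.

Lemma piX_I1i2 u : EinRep p q u -> (piX (inter M1 (image iota M2)) u <-> Bform p q v1 u * Bform p q v2 u < 0).
Proof. intros Hu. split.
  - intros [w [[M1w M2w] [c [cne ->]]]]. apply h1 in M1w as [_ B1]. apply img_iff in M2w as [_ B2]. rewrite !Bform_scal_r.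
    replace (c * Bform p q v1 w * (c * Bform p q v2 w)) with ((c * c) * (Bform p q v1 w * Bform p q v2 w)) by ring.
    assert (0 < c * c) by (apply Rlt_0_sqr in cne; unfold Rsqr in cne; lra).
    assert (Bform p q v1 w * Bform p q v2 w < 0) by nra. nra.
  - intros Hb. destruct (normalize u Hu) as [k [w [kp [Ew ->]]]]. rewrite !Bform_scal_r in Hb. apply sgn2 in Hb; auto.
    destruct (Rlt_le_dec 0 (Bform p q v1 w)) as [Hl|Hl].
    + exists w. split. split; [apply h1|apply img_iff]; split; auto. eapply sgn5; eauto. exists k; split; auto; lra.
    + destruct (sgn6 _ _ Hl Hb). exists (vopp w). split. split; [apply h1|apply img_iff]; (split; [apply Etilde_opp; auto|rewrite Bform_opp_r]); lra.
      exists (-k); split. lra. apply vscale_opp. Qed.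

Lemma partI u : EinRep p q u ->
  (piX (inter M1 (image iota M2)) u <-> (piX M1 u /\ piX M2 u /\ ~ piX (inter M1 M2) u)).
Proof. intros Hu. rewrite piX_I1i2, piX_M1, piX_M2, piX_I12 by auto.
  set (a := Bform p q v1 u). set (b := Bform p q v2 u). split.
  - intros H. split; [|split]. intro Z; rewrite Z in H; lra. intro Z; rewrite Z in H; lra. lra.
  - intros [Ha [Hb Hn]]. destruct (Rlt_le_dec (a * b) 0); auto. exfalso. apply Hn.
    destruct (Req_dec (a*b) 0). apply Rmult_integral in H as [H|H]; contradiction. lra. Qed.
End PartI.

Lemma transversal o m f : (2 <= m)%nat -> exists g, bsum o m g g = 1 /\ bsum o m f g = 0.
Proof. intros Hm. set (a := f o). set (b := f (o + 1)%nat).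
  assert (E0 : (o + 0 =? o)%nat = true) by (apply Nat.eqb_eq; lia).
  assert (E1 : (o + 1 =? o)%nat = false) by (apply Nat.eqb_neq; lia).
  assert (E2 : (o + 1 =? o + 1)%nat = true) by (apply Nat.eqb_eq; lia).
  assert (Ei : forall i, (2 <= i)%nat -> (o + i =? o)%nat = false /\ (o + i =? o + 1)%nat = false) by (intros; split; apply Nat.eqb_neq; lia).
  destruct (classic (a = 0 /\ b = 0)) as [[Ha Hb]|Hab].
  - exists (fun j => if (j =? o)%nat then 1 else 0). unfold bsum. split.
    + rewrite rsum_two; auto. rewrite E0, E1. ring. intros i Hi. destruct (Ei i ltac:(lia)) as [-> _]. ring.
    + rewrite rsum_two; auto. rewrite E0, E1. replace (o+0)%nat with o by lia. fold a. rewrite Ha. ring.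
      intros i Hi. destruct (Ei i ltac:(lia)) as [-> _]. ring.
  - set (h := fun j => if (j =? o)%nat then - b else if (j =? o + 1)%nat then a else 0).
    assert (Hhh : bsum o m h h = a * a + b * b).
    { unfold bsum, h. rewrite rsum_two; auto. rewrite E0, E1, E2. ring. intros i Hi. destruct (Ei i ltac:(lia)) as [-> ->]. ring. }
    assert (Hfh : bsum o m f h = 0).
    { unfold bsum, h. rewrite rsum_two; auto. rewrite E0, E1, E2. replace (o+0)%nat with o by lia. fold a b. ring. intros i Hi. destruct (Ei i ltac:(lia)) as [-> ->]. ring. }
    assert (HN : 0 < a * a + b * b).
    { destruct (Req_dec a 0). assert (b <> 0) by tauto. assert (0 < b * b) by (apply Rlt_0_sqr in H0; unfold Rsqr in H0; lra). nra.
      assert (0 < a * a) by (apply Rlt_0_sqr in H; unfold Rsqr in H; lra). nra. }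
    set (N := sqrt (a * a + b * b)). assert (0 < N) by (apply sqrt_lt_R0; auto).
    assert (NN : N * N = a * a + b * b) by (apply sqrt_sqrt; lra).
    exists (vscale (/ N) h). split.
    + rewrite bsum_scal_l, bsum_scal_r, Hhh, <- NN. field. lra.
    + rewrite bsum_scal_r, Hfh. ring.
Qed.

Lemma rsum_cont N (F : nat -> R -> R) x : (forall i, (i < N)%nat -> continuity_pt (F i) x) -> continuity_pt (fun t => rsum N (fun i => F i t)) x.
Proof. induction N; intros H; simpl. apply cont_const.
  apply (cont_plus (fun t => rsum N (fun i => F i t)) (F N)). apply IHN; intros; apply H; lia. apply H; lia. Qed.

Section Pert.
Variables p q : nat.

Lemma Bform_cont u (g : R -> vec) x : (forall j, continuity_pt (fun t => g t j) x) -> continuity_pt (fun t => Bform p q u (g t)) x.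
Proof. intros H. unfold Bform.
  apply (continuity_pt_minus (fun t => rsum (S p) (fun i => u i * g t i)) (fun t => rsum (S q) (fun i => u (S p + i)%nat * g t (S p + i)%nat))).
  apply (rsum_cont (S p) (fun i t => u i * g t i)). intros; apply (cont_mult (fun _ => u i) (fun t => g t i)); [apply cont_const| auto].
  apply (rsum_cont (S q) (fun i t => u (S p + i)%nat * g t (S p + i)%nat)). intros; apply (cont_mult (fun _ => u (S p + i)%nat) (fun t => g t (S p + i)%nat)); [apply cont_const| auto].
Qed.

Lemma from_path v w u1 u2 (g : R -> vec) : g 0 = w -> (forall j, continuity_pt (fun t => g t j) 0) ->
  (forall t, 0 < t <= 1 -> Etilde p q (g t) /\ Bform p q v (g t) > 0) ->
  Bform p q u1 w > 0 -> Bform p q u2 w > 0 ->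
  exists w', Etilde p q w' /\ Bform p q v w' > 0 /\ Bform p q u1 w' > 0 /\ Bform p q u2 w' > 0.
Proof. intros H0 Hc Hg B1 B2.
  destruct (cpt_eps _ _ (Bform_cont u1 g 0 Hc) _ B1) as [d1 [Hd1 H1]].
  destruct (cpt_eps _ _ (Bform_cont u2 g 0 Hc) _ B2) as [d2 [Hd2 H2]].
  rewrite H0 in H1, H2.
  set (t := Rmin 1 (Rmin d1 d2 / 2)).
  assert (0 < t) by (apply Rmin_glb_lt; [lra|]; pose proof (Rmin_pos d1 d2 Hd1 Hd2); lra).
  assert (t <= 1) by apply Rmin_l. assert (t <= Rmin d1 d2 / 2) by apply Rmin_r.
  pose proof (Rmin_l d1 d2). pose proof (Rmin_r d1 d2).
  destruct (Hg t ltac:(lra)) as [E Bv]. exists (g t). split; auto. split; auto.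
  specialize (H1 t ltac:(rewrite Rminus_0_r, Rabs_right; lra)). specialize (H2 t ltac:(rewrite Rminus_0_r, Rabs_right; lra)).
  apply Rabs_def2 in H1. apply Rabs_def2 in H2. lra. Qed.

Lemma spX_Etilde e w t : Etilde p q w -> bsum 0 (S p) e e = 1 -> c0 0 (S p) e w * c0 0 (S p) e w < K -> 0 <= t <= 1 ->
  Etilde p q (spath 0 (S p) e w t).
Proof. intros Ew He Hc Ht. apply Etilde_XY in Ew as [Hi [HX HY]]. apply Etilde_XY. split; [unfold spath; apply upd_isvec; auto; lia|split].
  unfold X. apply spath_norm; auto. unfold Y. rewrite spath_out2 by lia. auto. Qed.

Lemma spY_Etilde e w t : Etilde p q w -> bsum (S p) (S q) e e = 1 -> c0 (S p) (S q) e w * c0 (S p) (S q) e w < K -> 0 <= t <= 1 ->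
  Etilde p q (spath (S p) (S q) e w t).
Proof. intros Ew He Hc Ht. apply Etilde_XY in Ew as [Hi [HX HY]]. apply Etilde_XY. split; [unfold spath; apply upd_isvec; auto; lia|split].
  unfold X. rewrite spath_out2 by lia. auto. unfold Y. apply spath_norm; auto. Qed.

Lemma mu_lt1 o m e w t : c0 o m e w = 0 -> 0 < t <= 1 -> mu o m e w t < 1.
Proof. intros H0 Ht. unfold mu, cf. rewrite H0. apply (Rlt_le_trans _ (sqrt 1)); [|rewrite sqrt_1; lra]. apply sqrt_lt_1_alt. pose proof K_pos. pose proof r_sq. pose proof r_pos.
  replace ((1 - t) * 0 + t * r) with (t * r) by ring. replace (K - 0*0) with K by ring.
  replace (t*r*(t*r)) with (t*t*K) by (rewrite <- H1; ring). replace ((K - t*t*K)/K) with (1 - t*t) by (field; lra).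
  nra. Qed.

Lemma perturb v w u1 u2 : (1 <= p)%nat -> (1 <= q)%nat -> EinRep p q v -> Etilde p q w -> Bform p q v w = 0 ->
  Bform p q u1 w > 0 -> Bform p q u2 w > 0 ->
  exists w', Etilde p q w' /\ Bform p q v w' > 0 /\ Bform p q u1 w' > 0 /\ Bform p q u2 w' > 0.
Proof. intros Hp Hq Hv Ew Bw B1 B2.
  pose proof Ew as Ew'. apply Etilde_XY in Ew' as [Hi [HX HY]].
  pose proof (s_pos p q v Hv). pose proof r_sq. pose proof r_pos.
  pose proof (ex_unit p q v Hv) as Hex. pose proof (ey_unit p q v Hv) as Hey.
  rewrite (B_ex_ey p q v Hv) in Bw.
  set (c := X p (ex p v) w) in *. set (d := Y p q (ey p v) w) in *.
  assert (Hcd : d = - c) by (apply (Rmult_eq_reg_l (s p v)); lra).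
  pose proof (c0_le_r 0 (S p) (ex p v) w Hex HX) as Hcb. unfold c0 in Hcb. fold (X p (ex p v) w) in Hcb. fold c in Hcb.
  destruct (Rlt_le_dec c r) as [Hcr|Hcr]; [destruct (Rlt_le_dec (- r) c) as [Hrc|Hrc]|].
  -
    assert (Hcc : c0 0 (S p) (ex p v) w * c0 0 (S p) (ex p v) w < K) by (unfold c0; fold (X p (ex p v) w); fold c; nra).
    apply (from_path v w u1 u2 (spath 0 (S p) (ex p v) w)); auto.
    apply spath0; auto. intros j; apply spath_cont; auto; lra.
    intros t Ht. split. apply spX_Etilde; auto; lra.
    rewrite (B_ex_ey p q v Hv). unfold X at 1. rewrite spath_e; auto. unfold Y. rewrite spath_out by lia. fold Y. fold d.
    unfold cf, c0. fold (X p (ex p v) w). fold c. apply Rmult_lt_0_compat; auto. change (bsum (S p) (S q) (ey p v) w) with d. rewrite Hcd. nra.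
  -
    assert (Hc : c = - r) by lra.
    assert (Hco : forall i, (i < S p)%nat -> w (0 + i)%nat = c * ex p v (0 + i)%nat).
    { apply coord_eq; auto. fold (X p (ex p v) w). fold c. rewrite Hc. nra. }
    destruct (transversal 0 (S p) (ex p v) ltac:(lia)) as [g [Hg1 Hg2]].
    assert (Hgw : c0 0 (S p) g w = 0).
    { unfold c0, bsum. rewrite (rsum_ext _ _ (fun i => c * (ex p v (0+i)%nat * g (0+i)%nat))) by (intros; rewrite Hco by auto; ring).
      rewrite rsum_scal. change (rsum (S p) (fun i => ex p v (0+i)%nat * g (0+i)%nat)) with (bsum 0 (S p) (ex p v) g). rewrite Hg2. ring. }
    assert (Hcc : c0 0 (S p) g w * c0 0 (S p) g w < K) by (rewrite Hgw; pose K_pos; lra).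
    apply (from_path v w u1 u2 (spath 0 (S p) g w)); auto.
    apply spath0; auto. intros j; apply spath_cont; auto; lra.
    intros t Ht. split. apply spX_Etilde; auto; lra.
    rewrite (B_ex_ey p q v Hv). unfold X at 1. rewrite spath_g. rewrite Hg2, Hgw. fold (X p (ex p v) w). fold c.
    unfold Y. rewrite spath_out by lia. fold Y. fold d. pose proof (mu_lt1 0 (S p) g w t Hgw Ht).
    apply Rmult_lt_0_compat; auto. try change (bsum (S p) (S q) (ey p v) w) with d. rewrite Hcd, Hc. nra.
  -
    assert (Hc : c = r) by lra. assert (Hd : d = - r) by lra.
    assert (HYd : Y p q (ey p v) w = d) by reflexivity.
    assert (Hco : forall i, (i < S q)%nat -> w (S p + i)%nat = d * ey p v (S p + i)%nat).
    { apply coord_eq; auto. fold (Y p q (ey p v) w). fold d. rewrite Hd. nra. }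
    destruct (transversal (S p) (S q) (ey p v) ltac:(lia)) as [g [Hg1 Hg2]].
    assert (Hgw : c0 (S p) (S q) g w = 0).
    { unfold c0, bsum. rewrite (rsum_ext _ _ (fun i => d * (ey p v (S p+i)%nat * g (S p+i)%nat))) by (intros; rewrite Hco by auto; ring).
      rewrite rsum_scal. change (rsum (S q) (fun i => ey p v (S p+i)%nat * g (S p+i)%nat)) with (bsum (S p) (S q) (ey p v) g). rewrite Hg2. ring. }
    assert (Hcc : c0 (S p) (S q) g w * c0 (S p) (S q) g w < K) by (rewrite Hgw; pose K_pos; lra).
    apply (from_path v w u1 u2 (spath (S p) (S q) g w)); auto.
    apply spath0; auto. intros j; apply spath_cont; auto; lra.
    intros t Ht. split. apply spY_Etilde; auto; lra.
    rewrite (B_ex_ey p q v Hv). unfold Y at 1. rewrite spath_g. rewrite Hg2, Hgw. fold (Y p q (ey p v) w). fold d.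
    unfold X. rewrite spath_out by lia. fold X. fold c. pose proof (mu_lt1 (S p) (S q) g w t Hgw Ht).
    apply Rmult_lt_0_compat; auto. try change (bsum 0 (S p) (ex p v) w) with c. try change (X p (ex p v) w) with c. rewrite Hd, Hc. nra.
Qed.
End Pert.

Lemma half p q v1 v2 v3 : (1 <= p)%nat -> (1 <= q)%nat -> EinRep p q v1 -> EinRep p q v2 -> EinRep p q v3 ->
  (forall w, P p q v1 w /\ P p q v3 w -> P p q v2 w) -> (forall w, P p q v2 w /\ P p q v3 w -> P p q v1 w) ->
  forall w, P p q v1 w -> P p q v2 w.
Proof. intros Hp Hq H1 H2 H3 Ha Hb w [Ew Bw]. apply NNPP. intros Hn.
  assert (B2 : Bform p q v2 w <= 0). { destruct (Rlt_le_dec 0 (Bform p q v2 w)); auto. exfalso; apply Hn; split; auto. }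
  assert (Sa : exists w1, Etilde p q w1 /\ Bform p q v1 w1 > 0 /\ Bform p q v2 w1 < 0).
  { destruct (Rlt_le_dec (Bform p q v2 w) 0). exists w; auto.
    assert (Z : Bform p q (vopp v2) w = 0) by (rewrite Bform_opp_l; lra).
    destruct (perturb p q (vopp v2) w v1 v1 Hp Hq (EinRep_opp p q v2 H2) Ew Z Bw Bw) as [w1 [E1 [C1 [C2 _]]]].
    exists w1. rewrite Bform_opp_l in C1. split; [auto|split; lra]. }
  destruct Sa as [w1 [E1 [C1 C2]]].
  assert (Sb : exists w2, Etilde p q w2 /\ Bform p q v1 w2 > 0 /\ Bform p q v2 w2 < 0 /\ Bform p q v3 w2 <> 0).
  { destruct (Req_dec (Bform p q v3 w1) 0).
    assert (Z : Bform p q (vopp v2) w1 > 0) by (rewrite Bform_opp_l; lra).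
    destruct (perturb p q v3 w1 v1 (vopp v2) Hp Hq H3 E1 H C1 Z) as [w2 [E2 [D1 [D2 D3]]]].
    rewrite Bform_opp_l in D3. exists w2. split; [auto|split; [lra|split; lra]].
    exists w1; auto. }
  destruct Sb as [w2 [E2 [D1 [D2 D3]]]].
  destruct (Rlt_le_dec 0 (Bform p q v3 w2)).
  - destruct (Ha w2) as [_ F]. split; split; auto. lra.
  - assert (Bform p q v3 w2 < 0) by lra.
    destruct (Hb (vopp w2)) as [_ F]. split; split; try apply Etilde_opp; auto; rewrite Bform_opp_r; lra.
    rewrite Bform_opp_r in F. lra.
Qed.

Theorem lemma2p8 (p q : nat) (hp : (2 <= p)%nat) (hq : (2 <= q)%nat) :
  (forall M1 M2 : vec -> Prop,
     MinkPatchTilde p q M1 -> MinkPatchTilde p q M2 ->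
     forall u, EinRep p q u ->
       (piX (inter M1 (image iota M2)) u <->
        (piX M1 u /\ piX M2 u /\ ~ piX (inter M1 M2) u)))
  /\
  (forall M1 M2 M3 : vec -> Prop,
     MinkPatchTilde p q M1 -> MinkPatchTilde p q M2 -> MinkPatchTilde p q M3 ->
     (forall w, inter M1 M3 w <-> inter M2 M3 w) ->
     forall w, M1 w <-> M2 w).
Proof. split.
  - intros M1 M2 HM1 HM2 u Hu. destruct (comp_char p q M1 HM1) as [v1 [Hv1 h1]]. destruct (comp_char p q M2 HM2) as [v2 [Hv2 h2]].
    apply (partI p q M1 M2 v1 v2 h1 h2 u Hu).
  - intros M1 M2 M3 HM1 HM2 HM3 HI w.
    destruct (comp_char p q M1 HM1) as [v1 [Hv1 h1]]. destruct (comp_char p q M2 HM2) as [v2 [Hv2 h2]].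
    destruct (comp_char p q M3 HM3) as [v3 [Hv3 h3]].
    assert (A12 : forall w, P p q v1 w /\ P p q v3 w -> P p q v2 w).
    { intros z [a b]. apply h2. destruct (HI z) as [F _]. destruct F as [F _]; [split; [apply h1|apply h3]; auto|auto]. }
    assert (A21 : forall w, P p q v2 w /\ P p q v3 w -> P p q v1 w).
    { intros z [a b]. apply h1. destruct (HI z) as [_ F]. destruct F as [F _]; [split; [apply h2|apply h3]; auto|auto]. }
    rewrite h1, h2. split.
    apply (half p q v1 v2 v3); auto; lia.
    apply (half p q v2 v1 v3); auto; lia.
Qed.
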